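(* Let $T$ be a theory of henselian valued fields in the Denef–Pas language $L_{Pas}$ admitting relative quantifier elimination, and let $\mathcal K$ be a sufficiently saturated model of $T$. Let $(\psi_\alpha(x,y_\alpha,z_\alpha,z'_\alpha),(b_\alpha,c_\alpha,c'_\alpha))_{\alpha<\kappa}$ be an indiscernible inp-pattern in $\{x=x\}$ in $\mathcal K$, where $x$ is a single valued field sort variable, $y_\alpha$ is a tuple of VG-sort and RF-sort variables, and $z_\alpha,z'_\alpha$ are tuples of VF-sort variables, with corresponding parameter sequences $b_\alpha=(b_{\alpha,i})_{i<\omega}$, $c_\alpha=(c_{\alpha,i})_{i<\omega}$, $c'_\alpha=(c'_{\alpha,i})_{i<\omega}$. Assume that for each $\alpha<\kappa$ there are finitely many terms $t^1_\alpha,\dots,t^{n_\alpha}_\alpha$ occurring in the VG-sort and RF-sort components of $\psi_\alpha$ such that $x$ does not appear in any $t^j_\alpha$, and every occurrence in $\psi_\alpha$ of a variable from the tuple $z_\alpha$ lies inside some $t^j_\alpha$. Then for each $\alpha<\kappa$ there exist a tuple $y'_\alpha$ of VG-sort and RF-sort variables, a corresponding parameter sequence $b'_\alpha=(b'_{\alpha,i})_{i<\omega}$, and a formula $\phi'_\alpha(x,y'_\alpha,z'_\alpha)$ such that $(\phi'_\alpha(x,y'_\alpha,z'_\alpha),(b'_\alpha,c'_\alpha))_{\alpha<\kappa}$ is an indiscernible inp-pattern of the same depth $\kappa$.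
   Context: The Denef–Pas language $L_{Pas}$ is three-sorted: a valued field sort VF with the ring language; a value group sort VG with a language $L_{vg}$ expanding the language $\{0,+,-,<,\infty\}$ of ordered abelian groups; a residue field sort RF with a language $L_{rf}$ expanding the ring language; the only cross-sort symbols are the valuation $v:\mathrm{VF}\to\mathrm{VG}$ and an angular component map $ac:\mathrm{VF}\to\mathrm{RF}$ ($ac(0)=0$, $ac(u)=u+\mathfrak m$ for units $u$ of the valuation ring, $ac$ multiplicative). A theory admits relative quantifier elimination if every formula is equivalent modulo the theory to one with no quantifiers over VF-sort variables. An indiscernible inp-pattern of depth $\kappa$ in a partial type $\pi(x)$ consists of formulas $\phi_\alpha(x,w_\alpha)$ ($\alpha<\kappa$) and parameter sequences $(d_{\alpha,i})_{i<\omega}$ with $|d_{\alpha,i}|=|w_\alpha|$ such that the sequences $(d_{\alpha,i})_{i<\omega}$, $\alpha<\kappa$, are mutually indiscernible, each set $\{\phi_\alpha(x,d_{\alpha,i}):i<\omega\}$ is inconsistent, and $\pi(x)\cup\{\phi_\alpha(x,d_{\alpha,0}):\alpha<\kappa\}$ is consistent. In the notation $(\phi_\alpha(x,y_\alpha,z_\alpha),(b_\alpha,c_\alpha))$ the parameter tuple for row $\alpha$, index $i$, is $(b_{\alpha,i},c_{\alpha,i})$. *)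

(* Defs.v *)
From Stdlib Require List.
From mathcomp Require Import all_boot.

Set Implicit Arguments.
Unset Strict Implicit.
Unset Printing Implicit Defensive.

Inductive psort := VF | VG | RF.

Definition sort_eq_dec (s t : psort) : {s = t} + {s <> t}.
Proof. decide equality. Defined.

Definition var := (psort * nat)%type.

Definition var_eqb (v w : var) : bool :=
  (if sort_eq_dec v.1 w.1 then true else false) && (v.2 == w.2).

Definition memv (v : var) (vs : seq var) : bool := has (var_eqb v) vs.

(* The language L_Pas: L_vg and L_rf are arbitrary expansions by       *)
(* function and relation symbols on the VG, resp. RF, psort.            *)

Record lang := Lang {
  gfun : Type; gfun_ar : gfun -> nat;
  grel : Type; grel_ar : grel -> nat;
  rfun : Type; rfun_ar : rfun -> nat;
  rrel : Type; rrel_ar : rrel -> nat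
}.

Inductive term (L : lang) : psort -> Type :=
| tvar : forall s : psort, nat -> term L s
| fzero : term L VF
| fone : term L VF
| fadd : term L VF -> term L VF -> term L VF
| fopp : term L VF -> term L VF
| fmul : term L VF -> term L VF -> term L VF
| gzero : term L VG
| ginf : term L VG
| gadd : term L VG -> term L VG -> term L VG
| gopp : term L VG -> term L VG
| gapp : forall f : gfun L, ('I_(gfun_ar f) -> term L VG) -> term L VG
| rzero : term L RF
| rone : term L RF
| radd : term L RF -> term L RF -> term L RF
| ropp : term L RF -> term L RF
| rmul : term L RF -> term L RF -> term L RF
| rapp : forall f : rfun L, ('I_(rfun_ar f) -> term L RF) -> term L RF
| tval : term L VF -> term L VG
| tac : term L VF -> term L RF.

Inductive formula (L : lang) : Type :=
| ffalse : formula L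
| feq : forall s : psort, term L s -> term L s -> formula L
| flt : term L VG -> term L VG -> formula L
| fgrel : forall r : grel L, ('I_(grel_ar r) -> term L VG) -> formula L
| frrel : forall r : rrel L, ('I_(rrel_ar r) -> term L RF) -> formula L
| fnot : formula L -> formula L
| fand : formula L -> formula L -> formula L
| fex : psort -> nat -> formula L -> formula L.

Arguments ffalse {L}.

Unset Implicit Arguments.
Record structure (L : lang) := Struc {
  carrier : psort -> Type;
  vf0 : carrier VF; vf1 : carrier VF;
  vfadd : carrier VF -> carrier VF -> carrier VF;
  vfopp : carrier VF -> carrier VF;
  vfmul : carrier VF -> carrier VF -> carrier VF;
  vg0 : carrier VG; vginf : carrier VG;
  vgadd : carrier VG -> carrier VG -> carrier VG;
  vgopp : carrier VG -> carrier VG;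
  vglt : carrier VG -> carrier VG -> Prop;
  vgfun : forall f : gfun L, ('I_(gfun_ar f) -> carrier VG) -> carrier VG;
  vgrel : forall r : grel L, ('I_(grel_ar r) -> carrier VG) -> Prop;
  rf0 : carrier RF; rf1 : carrier RF;
  rfadd : carrier RF -> carrier RF -> carrier RF;
  rfopp : carrier RF -> carrier RF;
  rfmul : carrier RF -> carrier RF -> carrier RF;
  rffun : forall f : rfun L, ('I_(rfun_ar f) -> carrier RF) -> carrier RF;
  rfrel : forall r : rrel L, ('I_(rrel_ar r) -> carrier RF) -> Prop;
  sval : carrier VF -> carrier VG;
  sac : carrier VF -> carrier RF
}.
Set Implicit Arguments.
Arguments carrier {L} s.
Arguments vf0 {L} s.
Arguments vf1 {L} s.
Arguments vfadd {L} s.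
Arguments vfopp {L} s.
Arguments vfmul {L} s.
Arguments vg0 {L} s.
Arguments vginf {L} s.
Arguments vgadd {L} s.
Arguments vgopp {L} s.
Arguments vglt {L} s.
Arguments vgfun {L} s.
Arguments vgrel {L} s.
Arguments rf0 {L} s.
Arguments rf1 {L} s.
Arguments rfadd {L} s.
Arguments rfopp {L} s.
Arguments rfmul {L} s.
Arguments rffun {L} s.
Arguments rfrel {L} s.
Arguments sval {L} s.
Arguments sac {L} s.

Section Semantics.
Variable L : lang.
Variable M : structure L.

Definition asg := forall s : psort, nat -> carrier M s.

Definition upd (e : asg) (s : psort) (n : nat) (a : carrier M s) : asg :=
  fun s' n' =>
    match sort_eq_dec s s' with
    | left H => if n == n' then eq_rect s (carrier M) a s' H else e s' n'
    | right _ => e s' n'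
    end.
Arguments upd : clear implicits.

Fixpoint teval (e : asg) (s : psort) (t : term L s) {struct t} : carrier M s :=
  match t in term _ s return carrier M s with
  | tvar s n => e s n
  | fzero => vf0 M
  | fone => vf1 M
  | fadd a b => vfadd M (teval e a) (teval e b)
  | fopp a => vfopp M (teval e a)
  | fmul a b => vfmul M (teval e a) (teval e b)
  | gzero => vg0 M
  | ginf => vginf M
  | gadd a b => vgadd M (teval e a) (teval e b)
  | gopp a => vgopp M (teval e a)
  | gapp f args => vgfun M f (fun i => teval e (args i))
  | rzero => rf0 M
  | rone => rf1 M
  | radd a b => rfadd M (teval e a) (teval e b)
  | ropp a => rfopp M (teval e a)
  | rmul a b => rfmul M (teval e a) (teval e b)
  | rapp f args => rffun M f (fun i => teval e (args i))
  | tval a => sval M (teval e a)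
  | tac a => sac M (teval e a)
  end.

Fixpoint sat (e : asg) (phi : formula L) {struct phi} : Prop :=
  match phi with
  | ffalse => False
  | feq s t1 t2 => teval e t1 = teval e t2
  | flt t1 t2 => vglt M (teval e t1) (teval e t2)
  | fgrel r args => vgrel M r (fun i => teval e (args i))
  | frrel r args => rfrel M r (fun i => teval e (args i))
  | fnot p => ~ sat e p
  | fand p q => sat e p /\ sat e q
  | fex s n p => exists a : carrier M s, sat (upd e s n a) p
  end.

Definition ovr (vs : seq var) (d e : asg) : asg :=
  fun s n => if memv (s, n) vs then d s n else e s n.

End Semantics.
Arguments upd {L M} e s n a : rename.

Fixpoint tvars (L : lang) (s : psort) (t : term L s) (v : var) {struct t} : Prop :=
  match t with
  | tvar s n => v = (s, n)
  | fzero | fone | gzero | ginf | rzero | rone => False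
  | fadd a b | fmul a b => tvars a v \/ tvars b v
  | gadd a b => tvars a v \/ tvars b v
  | radd a b | rmul a b => tvars a v \/ tvars b v
  | fopp a => tvars a v
  | gopp a => tvars a v
  | ropp a => tvars a v
  | gapp f args => exists i, tvars (args i) v
  | rapp f args => exists i, tvars (args i) v
  | tval a => tvars a v
  | tac a => tvars a v
  end.

Fixpoint fvF (L : lang) (phi : formula L) (v : var) {struct phi} : Prop :=
  match phi with
  | ffalse => False
  | feq _ t1 t2 => tvars t1 v \/ tvars t2 v
  | flt t1 t2 => tvars t1 v \/ tvars t2 v
  | fgrel r args => exists i, tvars (args i) v
  | frrel r args => exists i, tvars (args i) v
  | fnot p => fvF p v
  | fand p q => fvF p v \/ fvF q v
  | fex s n p => fvF p v /\ v <> (s, n)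
  end.

Fixpoint noVFquant (L : lang) (phi : formula L) : Prop :=
  match phi with
  | fnot p => noVFquant p
  | fand p q => noVFquant p /\ noVFquant q
  | fex s n p => s <> VF /\ noVFquant p
  | _ => True
  end.

(* Coverage: every free occurrence of a VF-variable with index in zs lies
   inside an occurrence of one of the terms ts, at a position where no
   variable of that term is bound by an enclosing quantifier
   (bnd = variables bound by the enclosing quantifiers). *)
Fixpoint covT (L : lang) (zs : seq nat) (ts : seq {s : psort & term L s})
    (bnd : seq var) (s : psort) (t : term L s) {struct t} : Prop :=
  (List.In (existT _ s t) ts /\ forall v, tvars t v -> ~ List.In v bnd) \/
  match t with
  | tvar s' n => ~ (s' = VF /\ List.In n zs /\ ~ List.In (s', n) bnd)
  | fzero | fone | gzero | ginf | rzero | rone => True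
  | fadd a b | fmul a b => covT zs ts bnd a /\ covT zs ts bnd b
  | gadd a b => covT zs ts bnd a /\ covT zs ts bnd b
  | radd a b | rmul a b => covT zs ts bnd a /\ covT zs ts bnd b
  | fopp a => covT zs ts bnd a
  | gopp a => covT zs ts bnd a
  | ropp a => covT zs ts bnd a
  | gapp f args => forall i, covT zs ts bnd (args i)
  | rapp f args => forall i, covT zs ts bnd (args i)
  | tval a => covT zs ts bnd a
  | tac a => covT zs ts bnd a
  end.

Fixpoint covF (L : lang) (zs : seq nat) (ts : seq {s : psort & term L s})
    (bnd : seq var) (phi : formula L) {struct phi} : Prop :=
  match phi with
  | ffalse => True
  | feq _ t1 t2 => covT zs ts bnd t1 /\ covT zs ts bnd t2
  | flt t1 t2 => covT zs ts bnd t1 /\ covT zs ts bnd t2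
  | fgrel r args => forall i, covT zs ts bnd (args i)
  | frrel r args => forall i, covT zs ts bnd (args i)
  | fnot p => covF zs ts bnd p
  | fand p q => covF zs ts bnd p /\ covF zs ts bnd q
  | fex s n p => covF zs ts ((s, n) :: bnd) p
  end.

Definition zvars (zs : seq nat) : seq var := map (fun n => (VF, n)) zs.

Definition theory (L : lang) := formula L -> Prop.

Definition model (L : lang) (T : theory L) (M : structure L) : Prop :=
  forall phi, T phi -> forall e : asg M, sat e phi.

Definition relQE (L : lang) (T : theory L) : Prop :=
  forall phi : formula L, exists psi : formula L, noVFquant psi /\
    forall M : structure L, model T M -> forall e : asg M, sat e phi <-> sat e psi.

Definition is_field (A : Type) (z o : A) (add : A -> A -> A) (opp : A -> A)
    (mul : A -> A -> A) : Prop :=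
  [/\ (forall x y w, add x (add y w) = add (add x y) w) /\
        (forall x y, add x y = add y x) /\ (forall x, add z x = x) /\
        (forall x, add (opp x) x = z),
      (forall x y w, mul x (mul y w) = mul (mul x y) w) /\
        (forall x y, mul x y = mul y x) /\ (forall x, mul o x = x),
      (forall x y w, mul x (add y w) = add (mul x y) (mul x w)),
      o <> z
    & (forall x, x <> z -> exists y, mul x y = o)].

Definition is_oag_inf (G : Type) (z inf : G) (add : G -> G -> G) (opp : G -> G)
    (lt : G -> G -> Prop) : Prop :=
  let fin g := g <> inf in
  [/\ (forall g, ~ lt g g) /\ (forall g h k, lt g h -> lt h k -> lt g k) /\
        (forall g h, lt g h \/ g = h \/ lt h g),
      (forall g, fin g -> lt g inf) /\ fin z,
      (forall g h, fin g -> fin h -> fin (add g h)) /\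
        (forall g, fin g -> fin (opp g)),
      (forall g h k, fin g -> fin h -> fin k -> add g (add h k) = add (add g h) k) /\
        (forall g h, fin g -> fin h -> add g h = add h g) /\
        (forall g, fin g -> add z g = g) /\
        (forall g, fin g -> add (opp g) g = z) /\
        (forall g h k, fin g -> fin h -> fin k -> lt g h -> lt (add g k) (add h k))
    & forall g, add g inf = inf /\ add inf g = inf].

(* polynomials as coefficient lists [c0; c1; ...] *)
Definition peval (A : Type) (z : A) (add mul : A -> A -> A) (p : seq A) (a : A) : A :=
  foldr (fun c acc => add c (mul a acc)) z p.

Definition pderiv (A : Type) (z : A) (add : A -> A -> A) (p : seq A) : seq A :=
  mkseq (fun i => iter i.+1 (add (nth z p i.+1)) z) (size p).-1.

Definition hvf_ac (L : lang) (M : structure L) : Prop :=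
  let v := sval M in
  let le g h := vglt M g h \/ g = h in
  let O x := le (vg0 M) (v x) in
  let pev := peval (vf0 M) (vfadd M) (vfmul M) in
  [/\ is_field (vf0 M) (vf1 M) (vfadd M) (vfopp M) (vfmul M),
      is_field (rf0 M) (rf1 M) (rfadd M) (rfopp M) (rfmul M),
      is_oag_inf (vg0 M) (vginf M) (vgadd M) (vgopp M) (vglt M),
      (forall x, v x = vginf M <-> x = vf0 M) /\
      (forall x y, v (vfmul M x y) = vgadd M (v x) (v y)) /\
      (forall x y, le (v x) (v (vfadd M x y)) \/ le (v y) (v (vfadd M x y))) /\
      (forall g, exists x, v x = g) /\
      (* ac: ac(0) = 0, multiplicative, and ac(u) = u + m for units u, where
         RF is identified with O/m via the residue map res *)
      sac M (vf0 M) = rf0 M /\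
      (forall x y, sac M (vfmul M x y) = rfmul M (sac M x) (sac M y)) /\
      (exists res : carrier M VF -> carrier M RF,
         (forall x y, O x -> O y -> res (vfadd M x y) = rfadd M (res x) (res y)) /\
         (forall x y, O x -> O y -> res (vfmul M x y) = rfmul M (res x) (res y)) /\
         res (vf1 M) = rf1 M /\
         (forall r, exists x, O x /\ res x = r) /\
         (forall x, O x -> (res x = rf0 M <-> vglt M (vg0 M) (v x))) /\
         (forall u, v u = vg0 M -> sac M u = res u))
    &
      forall (p : seq (carrier M VF)) (a : carrier M VF),
        p <> [::] -> last (vf0 M) p = vf1 M -> (forall c, List.In c p -> O c) ->
        O a -> vglt M (vg0 M) (v (pev p a)) ->
        v (pev (pderiv (vf0 M) (vfadd M) p) a) = vg0 M ->
        exists b, O b /\ pev p b = vf0 M /\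
                  vglt M (vg0 M) (v (vfadd M b (vfopp M a)))].

Definition hvf_theory (L : lang) (T : theory L) : Prop :=
  forall M : structure L, model T M -> hvf_ac M.

Definition small (X Lam : Type) : Prop :=
  (exists f : X -> Lam, injective f) /\ ~ (exists g : Lam -> X, injective g).

(* A formula over A is a formula together with an assignment sending its
   other free variables into A. *)
Definition saturated (L : lang) (Lam : Type) (M : structure L) : Prop :=
  forall (A : forall s, carrier M s -> Prop),
    small {s : psort & {a : carrier M s | A s a}} Lam ->
    forall (s0 : psort) (n0 : nat) (P : formula L -> asg M -> Prop),
      (forall phi e, P phi e -> forall s n, fvF phi (s, n) -> (s, n) <> (s0, n0) ->
                     A s (e s n)) ->
      (forall l : seq (formula L * asg M), (forall q, List.In q l -> P q.1 q.2) ->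
         exists a, forall q, List.In q l -> sat (upd q.2 s0 n0 a) q.1) ->
      exists a, forall phi e, P phi e -> sat (upd e s0 n0 a) phi.

Section Indisc.
Variable L : lang.
Variable M : structure L.

Fixpoint place (vs : seq var) (sl : seq nat) (d e : asg M) : asg M :=
  match vs, sl with
  | v :: vs', n :: sl' => upd (place vs' sl' d e) v.1 n (d v.1 v.2)
  | _, _ => e
  end.

Fixpoint fill (vs : seq var) (sls : seq (seq nat)) (d : nat -> asg M)
    (I : seq nat) (e : asg M) : asg M :=
  match sls, I with
  | sl :: sls', i :: I' => place vs sl (d i) (fill vs sls' d I' e)
  | _, _ => e
  end.

Definition slotvar (vs : seq var) (sls : seq (seq nat)) (v : var) : Prop :=
  exists sl, List.In sl sls /\ exists j, j < minn (size vs) (size sl) /\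
    v = ((nth (VF, 0) vs j).1, nth 0 sl j).

Definition indisc_over (vs : seq var) (d : nat -> asg M)
    (A : forall s, carrier M s -> Prop) : Prop :=
  forall (theta : formula L) (sls : seq (seq nat)) (I J : seq nat) (e : asg M),
    (forall s n, fvF theta (s, n) -> ~ slotvar vs sls (s, n) -> A s (e s n)) ->
    size I = size sls -> size J = size sls -> sorted ltn I -> sorted ltn J ->
    (sat (fill vs sls d I e) theta <-> sat (fill vs sls d J e) theta).

Definition mut_indisc (kap : Type) (vars : kap -> seq var)
    (d : kap -> nat -> asg M) : Prop :=
  forall al : kap, indisc_over (vars al) (d al)
    (fun s a => exists (be : kap) (i n : nat),
        be <> al /\ List.In (s, n) (vars be) /\ a = d be i s n).

(* phi(x, d_i): x := (VF, xn) gets a, the parameter variables get d_i *)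
Definition inst (xn : nat) (vs : seq var) (di e : asg M) (a : carrier M VF) : asg M :=
  upd (ovr vs di e) VF xn a.

(* An indiscernible inp-pattern in the partial type pi(x), x = (VF, xn), of
   depth kap: rows phi al (x, vars al) with parameter sequences
   (d al i restricted to vars al)_{i<omega}. *)
Definition indisc_inp_pattern (pi : formula L -> Prop) (xn : nat) (kap : Type)
    (phi : kap -> formula L) (vars : kap -> seq var) (d : kap -> nat -> asg M) : Prop :=
  (forall al v, fvF (phi al) v -> v = (VF, xn) \/ List.In v (vars al)) /\
  (forall al, ~ List.In (VF, xn) (vars al)) /\
  (forall p v, pi p -> fvF p v -> v = (VF, xn)) /\
  mut_indisc vars d /\
  (forall al, exists I : seq nat, forall e a,
      ~ (forall i, List.In i I -> sat (inst xn (vars al) (d al i) e a) (phi al))) /\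
  (forall (F : seq kap) (P : seq (formula L)), (forall p, List.In p P -> pi p) ->
     exists e a, (forall p, List.In p P -> sat (upd e VF xn a) p) /\
       forall al, List.In al F -> sat (inst xn (vars al) (d al 0) e a) (phi al)).

End Indisc.

Definition xeqx (L : lang) (xn : nat) : formula L -> Prop :=
  fun p => p = feq (tvar L VF xn) (tvar L VF xn).

(* Main.v *)
Require Import Defs.
From Stdlib Require List.
From Stdlib Require Import Eqdep_dec ClassicalEpsilon Classical FunctionalExtensionality.
From mathcomp Require Import all_boot zify.

Set Implicit Arguments.
Unset Strict Implicit.
Unset Printing Implicit Defensive.

Lemma In_cat (T : Type) (x : T) (s1 s2 : seq T) :
  List.In x (s1 ++ s2) <-> List.In x s1 \/ List.In x s2.
Proof.
elim: s1 => [|y s1 IH] /=; first by split; [right|case].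
rewrite IH; tauto.
Qed.

Lemma NoDup_cat_disj (T : Type) (s1 s2 : seq T) x :
  List.NoDup (s1 ++ s2) -> List.In x s1 -> ~ List.In x s2.
Proof.
elim: s1 => [|y s1 IH] //= H.
inversion H; subst => -[<-|Hx] Hx2.
- by apply: H2; apply/In_cat; right.
- exact: IH H3 Hx Hx2.
Qed.

Lemma NoDup_cat_l (T : Type) (s1 s2 : seq T) :
  List.NoDup (s1 ++ s2) -> List.NoDup s1.
Proof.
elim: s1 => [|y s1 IH] //= H; first by constructor.
inversion H; subst; constructor; last exact: IH.
by move=> Hy; apply: H2; apply/In_cat; left.
Qed.

Lemma NoDup_cat_r (T : Type) (s1 s2 : seq T) :
  List.NoDup (s1 ++ s2) -> List.NoDup s2.
Proof. elim: s1 => [|y s1 IH] //= H. inversion H; subst; exact: IH. Qed.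

Lemma NoDup_cat (T : Type) (s1 s2 : seq T) :
  List.NoDup s1 -> List.NoDup s2 -> (forall x, List.In x s1 -> ~ List.In x s2) ->
  List.NoDup (s1 ++ s2).
Proof.
elim: s1 => [|y s1 IH] //= H1 H2 H3.
inversion H1; subst; constructor.
- move/In_cat => [//|]; exact: H3 (or_introl erefl).
- apply: IH => // x Hx; apply: H3; by right.
Qed.

Lemma In_filter (T : Type) (p : pred T) x s :
  List.In x (filter p s) <-> List.In x s /\ p x.
Proof.
elim: s => [|y s IH] /=; first by split => [|[]].
case Hp: (p y) => /=; rewrite IH.
- split; first by case=> [<-|[]]; auto.
  by case=> [[<-|H] H']; auto.
- split; first by case; auto.
  case=> [[E|H] H']; last by [].
  by move: Hp; rewrite E H'.
Qed.

Lemma In_nth_ex (T : Type) (d : T) x s :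
  List.In x s -> exists k, k < size s /\ nth d s k = x.
Proof.
elim: s => [|y s IH] //= [->|H]; first by exists 0.
by case: (IH H) => k [Hk Ek]; exists k.+1.
Qed.

Lemma nth_In (T : Type) (d : T) s k : k < size s -> List.In (nth d s k) s.
Proof.
elim: s k => [|y s IH] [|k] //=; first by left.
by move=> Hk; right; apply: IH.
Qed.

Lemma In_map_iota (T : Type) (f : nat -> T) m n x :
  List.In x (map f (iota m n)) <-> exists k, k < n /\ x = f (m + k).
Proof.
elim: n m => [|n IH] m /=; first by split=> [[]|[k []]].
rewrite IH; split.
- case=> [<-|[k [Hk ->]]]; first by exists 0; rewrite addn0.
  by exists k.+1; rewrite addnS -addSn.
- case=> [[|k]]; first by rewrite addn0 => -[_ ->]; left.
  by rewrite addnS -addSn => -[Hk ->]; right; exists k.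
Qed.

Lemma In_mkseq (T : Type) (f : nat -> T) n x :
  List.In x (mkseq f n) <-> exists k, k < n /\ x = f k.
Proof. by rewrite /mkseq In_map_iota. Qed.

Definition decP (P : Prop) : bool := if excluded_middle_informative P then true else false.
Lemma decPP (P : Prop) : decP P <-> P.
Proof. by rewrite /decP; case: excluded_middle_informative. Qed.

Lemma var_eqbP (v w : var) : reflect (v = w) (var_eqb v w).
Proof.
case: v w => [s n] [s' n']; rewrite /var_eqb /=.
case: sort_eq_dec => [E|H] /=.
- subst; by apply: (iffP eqP) => [->|[]].
- by constructor => -[].
Qed.

Lemma memvP v vs : reflect (List.In v vs) (memv v vs).
Proof.
elim: vs => [|w vs IH] /=; first by constructor.
rewrite /memv /=; case: (var_eqbP v w) => [->|H] /=; first by constructor; left.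
apply: (iffP IH) => [|[E|]] //; [by right | by case: H].
Qed.

Definition vidx (v : var) (vs : seq var) := find (var_eqb v) vs.

Lemma vidx_ok v vs : List.In v vs -> vidx v vs < size vs /\ nth (VF, 0) vs (vidx v vs) = v.
Proof.
move=> /memvP Hm; split; first by rewrite /vidx -has_find.
have := nth_find (VF, 0) Hm; by move/var_eqbP.
Qed.

Lemma In_zvars v ns : List.In v (zvars ns) <-> v.1 = VF /\ List.In v.2 ns.
Proof.
case: v => s n /=; elim: ns => [|m ns IH] /=; first by split => [|[]].
rewrite IH; split.
- by case=> [[-> ->]|[-> H]]; auto.
- by case=> -> [->|H]; auto.
Qed.
Section Sem2.
Variable L : lang.
Variable M : structure L.
Implicit Types (e g h : asg M).

Lemma upd_same e s n a : upd e s n a s n = a.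
Proof.
rewrite /upd; case: (sort_eq_dec s s) => [H|H]; last by case: H.
by rewrite eqxx (UIP_dec sort_eq_dec H erefl).
Qed.

Lemma upd_other e s n a s' n' : (s, n) <> (s', n') -> upd e s n a s' n' = e s' n'.
Proof.
rewrite /upd; case: sort_eq_dec => // H; subst => H.
by case: eqP => // E; subst; case: H.
Qed.

Lemma upd_ext e1 e2 s n a s' n' : e1 s' n' = e2 s' n' ->
  upd e1 s n a s' n' = upd e2 s n a s' n'.
Proof. by rewrite /upd; case: sort_eq_dec => // H; case: eqP. Qed.

Lemma teval_ext s (t : term L s) g1 g2 :
  (forall s' n', tvars t (s', n') -> g1 s' n' = g2 s' n') -> teval g1 t = teval g2 t.
Proof.
elim: t => /=.
- move=> s0 n H; exact: H.
all: try done.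
all: first
  [ move=> t IHt u IHu H; rewrite IHt ?IHu // => ? ? ?; apply: H; by [left|right]
  | move=> f args IH H; congr (_ _ _); apply: functional_extensionality => i;
    apply: IH => ? ? ?; apply: H; by exists i
  | move=> t IHt H; by rewrite IHt ].
Qed.

Lemma sat_ext (phi : formula L) g1 g2 :
  (forall s n, fvF phi (s, n) -> g1 s n = g2 s n) -> (sat g1 phi <-> sat g2 phi).
Proof.
elim: phi g1 g2 => /=.
- by [].
- move=> s t1 t2 g1 g2 H; rewrite (teval_ext (g1:=g1) (g2:=g2)) ?(teval_ext (t:=t2) (g1:=g1) (g2:=g2)) //;
    move=> ? ? ?; apply: H; by [left|right].
- move=> t1 t2 g1 g2 H; rewrite (teval_ext (g1:=g1) (g2:=g2)) ?(teval_ext (t:=t2) (g1:=g1) (g2:=g2)) //;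
    move=> ? ? ?; apply: H; by [left|right].
- move=> r args g1 g2 H.
  have -> : (fun i => teval g1 (args i)) = (fun i => teval g2 (args i)) => //.
  apply: functional_extensionality => i; apply: teval_ext => ? ? ?; apply: H; by exists i.
- move=> r args g1 g2 H.
  have -> : (fun i => teval g1 (args i)) = (fun i => teval g2 (args i)) => //.
  apply: functional_extensionality => i; apply: teval_ext => ? ? ?; apply: H; by exists i.
- move=> p IH g1 g2 H; by rewrite (IH g1 g2 H).
- move=> p IHp q IHq g1 g2 H; rewrite (IHp g1 g2) ?(IHq g1 g2) // => ? ? ?; apply: H; by [left|right].
- move=> s n p IH g1 g2 H.
  have E : forall a, sat (upd g1 s n a) p <-> sat (upd g2 s n a) p.
    move=> a; apply: IH => s' n' Hf.
    case: (var_eqbP (s, n) (s', n')) => E.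
      by case: E => <- <-; rewrite !upd_same.
    rewrite !upd_other //; apply: H; split => // E'; apply: E; by rewrite E'.
  by split=> -[a Ha]; exists a; apply/E.
Qed.

Lemma sat_ext1 (phi : formula L) g1 g2 :
  (forall s n, fvF phi (s, n) -> g1 s n = g2 s n) -> sat g1 phi -> sat g2 phi.
Proof. by move=> H; apply (sat_ext H). Qed.

End Sem2.
Section Syn.
Variable L : lang.

Fixpoint tren (f : psort -> nat -> nat) s (t : term L s) {struct t} : term L s :=
  match t in term _ s return term L s with
  | tvar s n => tvar L s (f s n)
  | fzero => fzero L
  | fone => fone L
  | fadd a b => fadd (tren f a) (tren f b)
  | fopp a => fopp (tren f a)
  | fmul a b => fmul (tren f a) (tren f b)
  | gzero => gzero L
  | ginf => ginf L
  | gadd a b => gadd (tren f a) (tren f b)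
  | gopp a => gopp (tren f a)
  | gapp g args => gapp (fun i => tren f (args i))
  | rzero => rzero L
  | rone => rone L
  | radd a b => radd (tren f a) (tren f b)
  | ropp a => ropp (tren f a)
  | rmul a b => rmul (tren f a) (tren f b)
  | rapp g args => rapp (fun i => tren f (args i))
  | Defs.tval a => Defs.tval (tren f a)
  | tac a => tac (tren f a)
  end.

Fixpoint tbound s (t : term L s) {struct t} : nat :=
  match t with
  | tvar s n => n.+1
  | fzero | fone | gzero | ginf | rzero | rone => 0
  | fadd a b | fmul a b => maxn (tbound a) (tbound b)
  | gadd a b => maxn (tbound a) (tbound b)
  | radd a b | rmul a b => maxn (tbound a) (tbound b)
  | fopp a => tbound a
  | gopp a => tbound a
  | ropp a => tbound a
  | gapp g args => \max_(i : 'I_(gfun_ar g)) tbound (args i)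
  | rapp g args => \max_(i : 'I_(rfun_ar g)) tbound (args i)
  | Defs.tval a => tbound a
  | tac a => tbound a
  end.

Fixpoint fbound (phi : formula L) : nat :=
  match phi with
  | ffalse => 0
  | feq _ a b => maxn (tbound a) (tbound b)
  | flt a b => maxn (tbound a) (tbound b)
  | fgrel r args => \max_(i : 'I_(grel_ar r)) tbound (args i)
  | frrel r args => \max_(i : 'I_(rrel_ar r)) tbound (args i)
  | fnot p => fbound p
  | fand p q => maxn (fbound p) (fbound q)
  | fex _ _ p => fbound p
  end.

Lemma tbound_ok s (t : term L s) v : tvars t v -> v.2 < tbound t.
Proof.
elim: t => /=.
- by move=> s0 n ->.
all: try done.
all: first
  [ (move=> t IHt u IHu [H|H]; rewrite leq_max; [by rewrite (IHt H) | by rewrite (IHu H) orbT])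
  | move=> f args IH [i Hi]; apply: (leq_trans (IH i Hi)); exact: (leq_bigmax i)
  | move=> t IHt H; exact: IHt ].
Qed.

Lemma fbound_ok (phi : formula L) v : fvF phi v -> v.2 < fbound phi.
Proof.
elim: phi => /=.
- by [].
- move=> s t1 t2 /= [H|H]; rewrite leq_max (tbound_ok H) ?orbT //.
- move=> t1 t2 /= [H|H]; rewrite leq_max (tbound_ok H) ?orbT //.
- move=> r args /= [i Hi]; apply: (leq_trans (tbound_ok Hi)); exact: (leq_bigmax i).
- move=> r args /= [i Hi]; apply: (leq_trans (tbound_ok Hi)); exact: (leq_bigmax i).
- by [].
- move=> p IHp q IHq /= [H|H]; rewrite leq_max; [by rewrite (IHp H) | by rewrite (IHq H) orbT].
- by move=> s n p IH /= [H _]; apply: IH.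
Qed.

Lemma fbound_ok' (phi : formula L) s n : fvF phi (s, n) -> n < fbound phi.
Proof. exact: fbound_ok. Qed.

Lemma tvars_tren f s (t : term L s) v :
  tvars (tren f t) v -> exists n, tvars t (v.1, n) /\ v.2 = f v.1 n.
Proof.
elim: t => /=.
- by move=> s0 n ->; exists n.
all: try done.
all: first
  [ (move=> t IHt u IHu [H|H]; [case: (IHt H)|case: (IHu H)] => n [H1 H2]; exists n; by auto)
  | (move=> g args IH [i Hi]; case: (IH i Hi) => n [H1 H2]; exists n; split => //; by exists i)
  | move=> t IHt H; exact: IHt ].
Qed.

Section WithM.
Variable M : structure L.
Implicit Types (e g h : asg M).

Lemma teval_tren f g s (t : term L s) :
  teval g (tren f t) = teval (fun s n => g s (f s n)) t.
Proof.
elim: t => //=.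
all: first
  [ move=> t IHt u IHu; by rewrite IHt IHu
  | move=> h args IH; congr (_ _ _); apply: functional_extensionality => i; exact: IH
  | move=> t IHt; by rewrite IHt ].
Qed.

Lemma place_notin vs sl d e s m :
  ~ List.In m sl -> place vs sl d e s m = e s m.
Proof.
elim: vs sl => [|v vs IH] [|n sl] //= H.
rewrite upd_other; first by apply: IH => H'; apply: H; right.
by case=> _ E; apply: H; left.
Qed.

Lemma fill_notin vs sls d I e s m :
  (forall sl, List.In sl sls -> ~ List.In m sl) -> fill vs sls d I e s m = e s m.
Proof.
elim: sls I => [|sl sls IH] [|i I] //= H.
rewrite place_notin; last by apply: H; left.
by apply: IH => sl' H'; apply: H; right.
Qed.

Lemma place_ext vs sl d e1 e2 s m :
  e1 s m = e2 s m -> place vs sl d e1 s m = place vs sl d e2 s m.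
Proof. elim: vs sl => [|v vs IH] [|n sl] //= H; apply: upd_ext; exact: IH. Qed.

Lemma fill_ext vs sls d I e1 e2 s m :
  e1 s m = e2 s m -> fill vs sls d I e1 s m = fill vs sls d I e2 s m.
Proof. elim: sls I => [|sl sls IH] [|i I] //= H; apply: place_ext; exact: IH. Qed.

Lemma place_nonslot vs sl d e s m :
  (forall j, j < minn (size vs) (size sl) -> ((nth (VF, 0) vs j).1, nth 0 sl j) <> (s, m)) ->
  place vs sl d e s m = e s m.
Proof.
elim: vs sl => [|v vs IH] [|n sl] //= H.
rewrite upd_other; last by apply: (H 0); rewrite minnSS.
apply: IH => j Hj; apply: (H j.+1); by rewrite minnSS.
Qed.

Lemma fill_nonslot vs sls d I e s m :
  ~ slotvar vs sls (s, m) -> fill vs sls d I e s m = e s m.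
Proof.
elim: sls I => [|sl sls IH] [|i I] //= H.
rewrite place_nonslot.
  apply: IH => -[sl' [Hin Hj]]; apply: H; exists sl'; split => //; by right.
move=> j Hj E; apply: H; exists sl; split; first by left.
by exists j; split => //; rewrite E.
Qed.

Lemma place_at vs sl d e k :
  uniq sl -> k < size vs -> k < size sl ->
  place vs sl d e (nth (VF, 0) vs k).1 (nth 0 sl k) = d (nth (VF, 0) vs k).1 (nth (VF, 0) vs k).2.
Proof.
elim: vs sl k => [|v vs IH] [|n sl] [|k] //=.
- by move=> _ _ _; rewrite upd_same.
- case/andP => Hn Hu Hk1 Hk2; rewrite upd_other; first exact: IH.
  case=> _ E; move: Hn; rewrite E mem_nth //.
Qed.

End WithM.
End Syn.
Section Chain.
Variable L : lang.
Definition pr := {s : psort & (nat * term L s)%type}.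
Definition pname (p : pr) : var := (projT1 p, (projT2 p).1).

Fixpoint chain (P : seq pr) (R : formula L) : formula L :=
  match P with
  | [::] => R
  | p :: P' => chain P' (fex (projT1 p) (projT2 p).1
                 (fand (feq (tvar L (projT1 p) (projT2 p).1) (projT2 p).2) R))
  end.

Fixpoint exl (ns : seq nat) (R : formula L) : formula L :=
  match ns with
  | [::] => R
  | n :: ns' => fex VF n (exl ns' R)
  end.

Fixpoint eqs (ws : seq var) (u : forall v : var, term L v.1) : formula L :=
  match ws with
  | [::] => fnot ffalse
  | w :: ws' => fand (feq (tvar L w.1 w.2) (u w)) (eqs ws' u)
  end.

Lemma fvF_chain P R v : fvF (chain P R) v ->
  (fvF R v /\ ~ List.In v (map pname P)) \/
  exists p, List.In p P /\ tvars (projT2 p).2 v.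
Proof.
elim: P R => [|p P IH] R /=; first by move=> H; left; split.
case/IH => [[/= [[[E|H]|H] Hne] Hn]|[p' [H1 H2]]].
- by case: Hne.
- by right; exists p; auto.
- left; split => //; case=> // E; by apply: Hne; rewrite -E.
- by right; exists p'; auto.
Qed.

Lemma fvF_exl ns R v : fvF (exl ns R) v -> fvF R v /\ ~ List.In v (zvars ns).
Proof.
elim: ns => [|n ns IH] /=; first by move=> H; split.
case=> /IH [H1 H2] H3; split => //; case=> // E; by apply: H3; rewrite -E.
Qed.

Lemma fvF_eqs ws u v : fvF (eqs ws u) v ->
  exists w, List.In w ws /\ (v = w \/ tvars (u w) v).
Proof.
elim: ws => [|w ws IH] /=; first by [].
case=> [[H|H]|H].
- by exists w; split; [left|left; case: w H].
- by exists w; split; [left|right].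
- case: (IH H) => w' [H1 H2]; exists w'; split => //; by right.
Qed.

Section ChainM.
Variable M : structure L.
Implicit Types (e g h : asg M).

Fixpoint updw g (P : seq pr) (base : asg M) : asg M :=
  match P with
  | [::] => base
  | p :: P' => upd (updw g P' base) (projT1 p) (projT2 p).1 (teval g (projT2 p).2)
  end.

Lemma updw_notin g P base s m :
  ~ List.In (s, m) (map pname P) -> updw g P base s m = base s m.
Proof.
elim: P => [|p P IH] //= H; rewrite upd_other; first by apply: IH => H'; apply: H; right.
by move=> E; apply: H; left; rewrite /pname E.
Qed.

Lemma updw_ext g P b1 b2 s m :
  b1 s m = b2 s m -> updw g P b1 s m = updw g P b2 s m.
Proof. elim: P => [|p P IH] //= H; apply: upd_ext; exact: IH. Qed.

Lemma updw_cat g P1 P2 base : updw g (P1 ++ P2) base = updw g P1 (updw g P2 base).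
Proof. by elim: P1 => [|p P1 IH] //=; rewrite IH. Qed.

Lemma chain_sat P R g :
  (forall p, List.In p P -> forall v, tvars (projT2 p).2 v -> ~ List.In v (map pname P)) ->
  (sat g (chain P R) <-> sat (updw g P g) R).
Proof.
elim: P R => [|p P IH] R //= H.
rewrite IH; last first.
  move=> p' Hp' v Hv Hin; apply: (H p' (or_intror Hp') v Hv); by right.
case: p H => s [n t] /= H.
set G := updw g P g.
have Et : forall a, teval (upd G s n a) t = teval g t.
  move=> a; apply: teval_ext => s' n' Hv.
  have Hn := H _ (or_introl erefl) _ Hv.
  rewrite upd_other; last by move=> E; apply: Hn; left; rewrite /pname /= E.
  rewrite /G updw_notin //; by move=> Hi; apply: Hn; right.
split.
- case=> a [/= Ea HR]; move: HR; rewrite upd_same in Ea; by rewrite Ea Et.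
- move=> HR; exists (teval g t); split => //=; by rewrite upd_same Et.
Qed.

Lemma exl_sat ns R g :
  sat g (exl ns R) <-> exists h, sat (ovr (zvars ns) h g) R.
Proof.
elim: ns g => [|n ns IH] g /=.
  split.
    by move=> H; exists g; move: H; apply: sat_ext1.
  by case=> h; apply: sat_ext1.
split.
- case=> a /IH [h Hh]; exists (ovr (zvars ns) h (upd g VF n a)).
  move: Hh; apply: sat_ext1 => s m _; rewrite /ovr /memv /=.
  case: (var_eqbP (s, m) (VF, n)) => [[-> ->]|E] /=.
    by case: (has _ _) => //; rewrite upd_same.
  by case: (has _ _) => //; rewrite upd_other // => E'; apply: E; rewrite E'.
- case=> h Hh; exists (h VF n); apply/IH; exists h.
  move: Hh; apply: sat_ext1 => s m _; rewrite /ovr /memv /=.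
  case: (var_eqbP (s, m) (VF, n)) => [[-> ->]|E] /=.
    by case: (has _ _) => //; rewrite upd_same.
  by case: (has _ _) => //; rewrite upd_other // => E'; apply: E; rewrite E'.
Qed.

Lemma eqs_sat ws u g :
  sat g (eqs ws u) <-> forall w, List.In w ws -> g w.1 w.2 = teval g (u w).
Proof.
elim: ws => [|w ws IH] /=; first by split; [move=> _ w []|move=> _ []].
rewrite IH; split.
- by case=> E H w' [<-|H'] //; apply: H.
- by move=> H; split; [apply: H; left | move=> w' H'; apply: H; right].
Qed.

End ChainM.
End Chain.
Section Cov.
Variable L : lang.
Variable M : structure L.
Variables (zs : seq nat) (ts : seq {s : psort & term L s}) (Q : var -> Prop).

Definition H1c bnd (g1 g2 : asg M) :=
  forall v, (List.In v bnd \/ Q v) -> ~ (v.1 = VF /\ List.In v.2 zs /\ ~ List.In v bnd) ->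
    g1 v.1 v.2 = g2 v.1 v.2.
Definition H2c bnd (g1 g2 : asg M) :=
  forall t, List.In t ts -> (forall v, tvars (projT2 t) v -> Q v) ->
    (forall v, tvars (projT2 t) v -> ~ List.In v bnd) ->
    teval g1 (projT2 t) = teval g2 (projT2 t).

Lemma covT_ok bnd g1 g2 : H1c bnd g1 g2 -> H2c bnd g1 g2 ->
  forall s (t : term L s), covT zs ts bnd t ->
  (forall v, tvars t v -> ~ List.In v bnd -> Q v) -> teval g1 t = teval g2 t.
Proof.
move=> H1 H2.
have Hts : forall s (t : term L s), List.In (existT _ s t) ts ->
    (forall v, tvars t v -> ~ List.In v bnd) ->
    (forall v, tvars t v -> ~ List.In v bnd -> Q v) -> teval g1 t = teval g2 t.
  move=> s t Hin Hb INV; apply: (H2 _ Hin) => //= v Hv; exact: INV v Hv (Hb v Hv).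
move=> s t; elim: t => /=.
- move=> s0 n [[Hin Hb] INV|Hm INV]; first exact: (Hts _ _ Hin Hb INV).
  apply: (H1 (s0, n)) => //.
  case: (classic (List.In (s0, n) bnd)) => Hb; [by left | right; exact: INV].
all: try (by intros).
all: first
  [ (move=> t IHt u IHu [[Hin Hb] INV|[Ht Hu] INV]; [exact: (Hts _ _ Hin Hb INV)|];
     rewrite (IHt Ht) ?(IHu Hu) // => v Hv Hb; apply: INV => //; by [left|right])
  | (move=> f args IH [[Hin Hb] INV|Hm INV]; [exact: (Hts _ _ Hin Hb INV)|];
     congr (_ _ _); apply: functional_extensionality => i;
     apply: (IH i (Hm i)) => v Hv Hb; apply: INV => //; by exists i)
  | (move=> t IHt [[Hin Hb] INV|Ht INV]; [exact: (Hts _ _ Hin Hb INV)|];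
     rewrite (IHt Ht) // => v Hv Hb; exact: INV) ].
Qed.

Lemma covF_ok (phi : formula L) bnd g1 g2 : H1c bnd g1 g2 -> H2c bnd g1 g2 ->
  covF zs ts bnd phi -> (forall v, fvF phi v -> ~ List.In v bnd -> Q v) ->
  (sat g1 phi <-> sat g2 phi).
Proof.
elim: phi bnd g1 g2 => /=.
- by [].
- move=> s t1 t2 bnd g1 g2 H1 H2 [Ht1 Ht2] INV.
  rewrite (covT_ok H1 H2 Ht1) ?(covT_ok H1 H2 Ht2) // => v Hv Hb; apply: INV => //; by [left|right].
- move=> t1 t2 bnd g1 g2 H1 H2 [Ht1 Ht2] INV.
  rewrite (covT_ok H1 H2 Ht1) ?(covT_ok H1 H2 Ht2) // => v Hv Hb; apply: INV => //; by [left|right].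
- move=> r args bnd g1 g2 H1 H2 Hc INV.
  have -> // : (fun i => teval g1 (args i)) = (fun i => teval g2 (args i)).
  apply: functional_extensionality => i; apply: (covT_ok H1 H2 (Hc i)) => v Hv Hb.
  apply: INV => //; by exists i.
- move=> r args bnd g1 g2 H1 H2 Hc INV.
  have -> // : (fun i => teval g1 (args i)) = (fun i => teval g2 (args i)).
  apply: functional_extensionality => i; apply: (covT_ok H1 H2 (Hc i)) => v Hv Hb.
  apply: INV => //; by exists i.
- move=> p IH bnd g1 g2 H1 H2 Hc INV; by rewrite (IH bnd g1 g2).
- move=> p IHp q IHq bnd g1 g2 H1 H2 [Hp Hq] INV.
  rewrite (IHp bnd g1 g2) ?(IHq bnd g1 g2) // => v Hv Hb; apply: INV => //; by [left|right].
- move=> s n p IH bnd g1 g2 H1 H2 Hc INV.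
  have E : forall a, sat (upd g1 s n a) p <-> sat (upd g2 s n a) p.
    move=> a; apply: (IH ((s, n) :: bnd)) => //.
    + case=> s' n' Hq Hnz /=.
      case: (var_eqbP (s, n) (s', n')) => E.
        by case: E => <- <-; rewrite !upd_same.
      rewrite !upd_other //; apply: (H1 (s', n')).
        case: Hq => [[E'|H]|H]; [by case: E | by left | by right].
      case=> /= [Hs [Hz Hb]]; apply: Hnz; split => //; split => //.
      by case=> [E'|//]; apply: E.
    + move=> t Hin HQ Hb.
      have Hr : forall g : asg M, teval (upd g s n a) (projT2 t) = teval g (projT2 t).
        move=> g; apply: teval_ext => s' n' Hv; rewrite upd_other //.
        by move=> E; apply: (Hb _ Hv); left.
      rewrite !Hr; apply: H2 => // v Hv Hi; apply: (Hb v Hv); by right.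
    + move=> v Hv Hb; apply: INV; first split => //.
        by move=> E; apply: Hb; left.
      by move=> Hi; apply: Hb; right.
  by split=> -[a Ha]; exists a; apply/E.
Qed.

End Cov.
Section Main.
Variables (L : lang) (K : structure L) (kap : Type) (xn : nat)
  (psi : kap -> formula L) (ys : kap -> seq var) (zs zs' : kap -> seq nat)
  (b c c' : kap -> nat -> asg K) (ts : kap -> seq {s : psort & term L s}).

Definition ov al := ys al ++ zvars (zs al) ++ zvars (zs' al).
Definition dd al i := ovr (ys al) (b al i) (ovr (zvars (zs al)) (c al i) (c' al i)).

Hypothesis Hys : forall al v, List.In v (ys al) -> v.1 = VG \/ v.1 = RF.
Hypothesis Hnd : forall al, List.NoDup (ys al ++ zvars (zs al) ++ zvars (zs' al)).
Hypothesis Hts : forall al t, List.In t (ts al) ->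
  (projT1 t = VG \/ projT1 t = RF) /\ ~ tvars (projT2 t) (VF, xn).
Hypothesis Hcov : forall al, covF (zs al) (ts al) [::] (psi al).
Hypothesis Hpat : indisc_inp_pattern (@xeqx L xn) xn psi ov dd.

Definition tfs al := filter (fun t => decP (forall v, tvars (projT2 t) v -> List.In v (ov al))) (ts al).
Definition Nb al := (foldr maxn 0 (map (fun v : var => v.2) (ys al))).+1.
Definition dflt : {s : psort & term L s} := existT _ VG (gzero L).
Definition ws al := mkseq (fun k => (projT1 (nth dflt (tfs al) k), Nb al + k)) (size (tfs al)).
Definition castT (t : {s : psort & term L s}) (s : psort) : term L s :=
  match t with existT s' t' =>
    match sort_eq_dec s' s with
    | left H => eq_rect s' (term L) t' s H
    | right _ => tvar L s 0
    end
  end.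
Definition uterm al (v : var) : term L v.1 :=
  if memv v (ws al) then castT (nth dflt (tfs al) (v.2 - Nb al)) v.1 else tvar L v.1 v.2.
Definition b' al i : asg K := fun s n =>
  if memv (s, n) (ws al) then teval (dd al i) (uterm al (s, n)) else b al i s n.
Definition ys' al := ys al ++ ws al.
Definition nv al := ys' al ++ zvars (zs' al).
Definition d' al i := ovr (ys' al) (b' al i) (c' al i).
Definition phi' al := exl (zs al) (fand (eqs (ws al) (uterm al)) (psi al)).

Lemma ovr_in vs (h g : asg K) v : List.In v vs -> ovr vs h g v.1 v.2 = h v.1 v.2.
Proof. by case: v => s n /memvP H; rewrite /ovr H. Qed.
Lemma ovr_notin vs (h g : asg K) v : ~ List.In v vs -> ovr vs h g v.1 v.2 = g v.1 v.2.
Proof. by case: v => s n H; rewrite /ovr; case: memvP. Qed.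

Lemma Nb_ok al v : List.In v (ys al) -> v.2 < Nb al.
Proof.
rewrite /Nb ltnS; elim: (ys al) => [|w s IH] //= [->|H]; first exact: leq_maxl.
exact: leq_trans (IH H) (leq_maxr _ _).
Qed.

Lemma In_ws al w : List.In w (ws al) <->
  exists k, k < size (tfs al) /\ w = (projT1 (nth dflt (tfs al) k), Nb al + k).
Proof. exact: In_mkseq. Qed.

Lemma tfs_in al k : k < size (tfs al) ->
  List.In (nth dflt (tfs al) k) (ts al) /\
  (forall v, tvars (projT2 (nth dflt (tfs al) k)) v -> List.In v (ov al)).
Proof. by move=> /(nth_In dflt) /In_filter [H1 /decPP H2]. Qed.

Lemma ws_sort al w : List.In w (ws al) -> w.1 = VG \/ w.1 = RF.
Proof. by case/In_ws => k [Hk ->] /=; case: (Hts (tfs_in Hk).1). Qed.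

Lemma ws_notVF al w : List.In w (ws al) -> w.1 <> VF.
Proof. by move=> /ws_sort [->|->]. Qed.

Lemma ws_not_ys al w : List.In w (ws al) -> ~ List.In w (ys al).
Proof.
case/In_ws => k [Hk ->] /Nb_ok /=; by rewrite ltnNge leq_addr.
Qed.

Lemma zvars_VF v ns : List.In v (zvars ns) -> v.1 = VF.
Proof. by case/In_zvars. Qed.

Lemma ws_not_z al w ns : List.In w (ws al) -> ~ List.In w (zvars ns).
Proof. by move=> H /zvars_VF; apply: ws_notVF H. Qed.

Lemma ys_not_z al w ns : List.In w (ys al) -> ~ List.In w (zvars ns).
Proof. by move=> /Hys Hs /zvars_VF E; rewrite E in Hs; case: Hs. Qed.

Lemma castT_self t : castT t (projT1 t) = projT2 t.
Proof.
case: t => s t /=; case: (sort_eq_dec s s) => [H|H]; last by case: H.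
by rewrite (UIP_dec sort_eq_dec H erefl).
Qed.

Lemma uterm_ws al k : k < size (tfs al) ->
  uterm al (projT1 (nth dflt (tfs al) k), Nb al + k) = projT2 (nth dflt (tfs al) k).
Proof.
move=> Hk; rewrite /uterm.
have -> : memv (projT1 (nth dflt (tfs al) k), Nb al + k) (ws al).
  by apply/memvP/In_ws; exists k.
by rewrite /= addKn castT_self.
Qed.

Lemma uterm_notws al v : ~ List.In v (ws al) -> uterm al v = tvar L v.1 v.2.
Proof. by rewrite /uterm; case: memvP. Qed.

Lemma In_nv al v : List.In v (nv al) <->
  List.In v (ys al) \/ List.In v (ws al) \/ List.In v (zvars (zs' al)).
Proof. by rewrite /nv /ys' !In_cat; tauto. Qed.

Lemma In_ov al v : List.In v (ov al) <->
  List.In v (ys al) \/ List.In v (zvars (zs al)) \/ List.In v (zvars (zs' al)).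
Proof. by rewrite /ov !In_cat. Qed.

Lemma uterm_vars al v w : List.In v (nv al) -> tvars (uterm al v) w -> List.In w (ov al).
Proof.
case: (classic (List.In v (ws al))) => Hw.
  case/In_ws: (Hw) => k [Hk ->] _; rewrite uterm_ws //; exact: (tfs_in Hk).2.
rewrite uterm_notws //= => /In_nv Hv ->; case: v Hv Hw => s n Hv Hw /=.
apply/In_ov; tauto.
Qed.

Lemma zs'_not_ys al v : List.In v (zvars (zs' al)) -> ~ List.In v (ys al).
Proof. by move=> H1 H2; apply: (ys_not_z H2 H1). Qed.

Lemma zs'_not_zs al v : List.In v (zvars (zs' al)) -> ~ List.In v (zvars (zs al)).
Proof.
move=> H1 H2; exact: (NoDup_cat_disj (NoDup_cat_r (Hnd al)) H2 H1).
Qed.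

Lemma dd_ys al i v : List.In v (ys al) -> dd al i v.1 v.2 = b al i v.1 v.2.
Proof. exact: ovr_in. Qed.

Lemma dd_zs' al i v : List.In v (zvars (zs' al)) -> dd al i v.1 v.2 = c' al i v.1 v.2.
Proof.
move=> H; rewrite /dd ovr_notin; last exact: zs'_not_ys.
by rewrite ovr_notin //; apply: zs'_not_zs.
Qed.

Lemma uterm_val al i v : List.In v (nv al) -> teval (dd al i) (uterm al v) = d' al i v.1 v.2.
Proof.
move=> Hv; case: (classic (List.In v (ws al))) => Hw.
  rewrite /d' ovr_in; last by rewrite /ys' In_cat; right.
  by case: v Hv Hw => s n Hv Hw; rewrite /b' /=; case: memvP.
rewrite uterm_notws //=; case/In_nv: Hv => [Hy|[//|Hz]].
  rewrite /d' ovr_in ?dd_ys //; last by rewrite /ys' In_cat; left.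
  by case: v Hy Hw => s n Hy Hw; rewrite /b' /=; case: memvP.
rewrite /d' ovr_notin ?dd_zs' //.
by rewrite /ys' In_cat => -[H|H]; [apply: (zs'_not_ys Hz) | apply: (ws_not_z H Hz)].
Qed.

Lemma d'_old al i v : List.In v (ys al) \/ List.In v (zvars (zs' al)) ->
  d' al i v.1 v.2 = dd al i v.1 v.2.
Proof.
move=> H; rewrite -uterm_val; last by apply/In_nv; tauto.
rewrite uterm_notws //; case: H => H Hw; [exact: ws_not_ys Hw H | exact: ws_not_z Hw H].
Qed.


Lemma x_notin_ov al : ~ List.In (VF, xn) (ov al).
Proof. by case: Hpat => _ [H _]; apply: H. Qed.

Lemma x_notin_nv al : ~ List.In (VF, xn) (nv al).
Proof.
case/In_nv => [H|[H|H]].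
- by apply: (x_notin_ov (al:=al)); apply/In_ov; left.
- by apply: (ws_notVF H).
- by apply: (x_notin_ov (al:=al)); apply/In_ov; right; right.
Qed.

Lemma inst_old_at al i e a v : List.In v (ov al) ->
  inst xn (ov al) (dd al i) e a v.1 v.2 = dd al i v.1 v.2.
Proof.
move=> H; rewrite /inst upd_other; first exact: ovr_in.
by case: v H => s n H E; apply: (x_notin_ov (al:=al)); rewrite E.
Qed.

Lemma inst_new_at al i e a v : List.In v (nv al) ->
  inst xn (nv al) (d' al i) e a v.1 v.2 = d' al i v.1 v.2.
Proof.
move=> H; rewrite /inst upd_other; first exact: ovr_in.
by case: v H => s n H E; apply: (x_notin_nv (al:=al)); rewrite E.
Qed.

Lemma wf1' al v : fvF (phi' al) v -> v = (VF, xn) \/ List.In v (nv al).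
Proof.
case/fvF_exl => /= [[H|H] Hz].
- case/fvF_eqs: H => w [Hw [->|Ht]].
    by right; apply/In_nv; tauto.
  have : List.In v (ov al) by apply: (uterm_vars _ Ht); apply/In_nv; tauto.
  by case/In_ov => [?|[?|?]]; [right; apply/In_nv; left | | right; apply/In_nv; right; right].
- case: Hpat => H1 _; case: (H1 al v H) => [->|]; first by left.
  by case/In_ov => [?|[?|?]]; [right; apply/In_nv; left | | right; apply/In_nv; right; right].
Qed.

Lemma nodup' al : List.NoDup (ys' al ++ zvars (zs' al)).
Proof.
have Hy := NoDup_cat_l (Hnd al).
have Hz := NoDup_cat_r (NoDup_cat_r (Hnd al)).
apply: NoDup_cat => //.
- apply: NoDup_cat => //; last by move=> x /ws_not_ys H H'; apply: H.
  rewrite /ws /mkseq; move: 0 => m; elim: (size (tfs al)) m => [|n IH] m /=.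
    by constructor.
  constructor; last exact: IH.
  move/In_map_iota => [k [_ E]]; case: E => _ E; lia.
- move=> v; rewrite In_cat => -[H|H] H'.
  + by apply: (NoDup_cat_disj (Hnd al) H); rewrite In_cat; right.
  + exact: ws_not_z H H'.
Qed.


Definition Qx al (v : var) := v = (VF, xn) \/ List.In v (ov al).

Lemma ov_notzs al v : List.In v (ov al) -> ~ List.In v (zvars (zs al)) ->
  List.In v (ys al) \/ List.In v (zvars (zs' al)).
Proof. by case/In_ov => [?|[?|?]]; tauto. Qed.

Lemma x_notin_zs al : ~ List.In (VF, xn) (zvars (zs al)).
Proof. by move=> H; apply: (x_notin_ov (al:=al)); apply/In_ov; tauto. Qed.

Lemma incons' al : exists I : seq nat, forall e a,
  ~ (forall i, List.In i I -> sat (inst xn (nv al) (d' al i) e a) (phi' al)).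
Proof.
case: Hpat => Hwf1 [_ [_ [_ [Hinc _]]]]; case: (Hinc al) => I HI.
exists I => e a Hall; apply: (HI e a) => i Hi.
have := Hall i Hi; rewrite /phi' => /exl_sat [h /= [Heqs Hpsi]].
move/eqs_sat: Heqs => Heqs.
set G := inst xn (nv al) (d' al i) e a in Heqs Hpsi.
set g1 := ovr (zvars (zs al)) h G in Heqs Hpsi.
have H1 : H1c (zs al) (Qx al) [::] g1 (inst xn (ov al) (dd al i) e a).
  move=> v Hq Hnz.
  have Hnz' : ~ List.In v (zvars (zs al)).
    by move/In_zvars => [E1 E2]; apply: Hnz; split => //; split => // [].
  rewrite /g1 (ovr_notin h G Hnz').
  case: Hq => [[]|[E|Hv]].
    by rewrite E /G /inst !upd_same.
  rewrite inst_old_at // /G inst_new_at; last by apply/In_nv; have := ov_notzs Hv Hnz'; tauto.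
  by rewrite d'_old //; apply: ov_notzs.
have H2 : H2c (ts al) (Qx al) [::] g1 (inst xn (ov al) (dd al i) e a).
  move=> t Ht HQ _.
  have Hov : forall v, tvars (projT2 t) v -> List.In v (ov al).
    move=> v Hv; case: (HQ v Hv) => // E; rewrite E in Hv; by case: (Hts Ht).
  have Htf : List.In t (tfs al) by apply/In_filter; split => //; apply/decPP.
  case: (In_nth_ex dflt Htf) => k [Hk Ek]; rewrite -Ek.
  have Hw : List.In (projT1 (nth dflt (tfs al) k), Nb al + k) (ws al) by apply/In_ws; exists k.
  have E1 := Heqs _ Hw; rewrite uterm_ws // in E1.
  rewrite -E1 /g1 ovr_notin; last exact: ws_not_z Hw.
  rewrite /G inst_new_at; last by apply/In_nv; tauto.
  rewrite -uterm_val; last by apply/In_nv; tauto.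
  rewrite uterm_ws //; symmetry; apply: teval_ext => s' n' Hv.
  exact: (inst_old_at i e a ((tfs_in Hk).2 _ Hv)).
have INV : forall v, fvF (psi al) v -> ~ List.In v [::] -> Qx al v.
  by move=> v Hv _; apply: Hwf1.
exact: (proj1 (covF_ok H1 H2 (Hcov al) INV) Hpsi).
Qed.

Lemma cons' (F : seq kap) (P : seq (formula L)) :
  (forall p, List.In p P -> xeqx xn p) ->
  exists e a, (forall p, List.In p P -> sat (upd e VF xn a) p) /\
    forall al, List.In al F -> sat (inst xn (nv al) (d' al 0) e a) (phi' al).
Proof.
case: Hpat => Hwf1 [_ [_ [_ [_ Hcons]]]] HP.
case: (Hcons F P HP) => e [a [HP' H2]]; exists e, a; split => // al Hal.
apply/exl_sat; exists (dd al 0).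
set G := inst xn (nv al) (d' al 0) e a.
have Hg : forall v, List.In v (ov al) ->
    ovr (zvars (zs al)) (dd al 0) G v.1 v.2 = dd al 0 v.1 v.2.
  move=> v Hv; case: (classic (List.In v (zvars (zs al)))) => Hz; first exact: ovr_in.
  rewrite ovr_notin // /G inst_new_at; last by apply/In_nv; have := ov_notzs Hv Hz; tauto.
  by rewrite d'_old //; apply: ov_notzs.
split.
- apply/eqs_sat => w Hw.
  have Hwn : List.In w (nv al) by apply/In_nv; tauto.
  rewrite (ovr_notin (dd al 0) G (ws_not_z Hw)).
  rewrite /G inst_new_at // -uterm_val //; symmetry; apply: teval_ext => s' n' Hv.
  by apply: (Hg (s', n')); apply: uterm_vars Hv.
- move: (H2 al Hal); apply: sat_ext1 => s n Hf.
  case: (Hwf1 al _ Hf) => [[-> ->]|Hv].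
    rewrite /inst upd_same (ovr_notin (dd al 0) G (x_notin_zs (al:=al))).
    by rewrite /G /inst upd_same.
  by rewrite (inst_old_at 0 e a Hv) (Hg (s, n)).
Qed.


Definition A_old al s (a : carrier K s) :=
  exists (be : kap) (i n : nat), be <> al /\ List.In (s, n) (ov be) /\ a = dd be i s n.
Definition A_new al s (a : carrier K s) :=
  exists (be : kap) (i n : nat), be <> al /\ List.In (s, n) (nv be) /\ a = d' be i s n.

Definition slb (sls : seq (seq nat)) := (foldr maxn 0 (flatten sls)).+1.

Lemma fmax_ok m s : List.In m s -> m <= foldr maxn 0 s.
Proof.
elim: s => [|x s IH] //= [->|H]; first exact: leq_maxl.
exact: leq_trans (IH H) (leq_maxr _ _).
Qed.

Lemma slb_ok sls sl m : List.In sl sls -> List.In m sl -> m < slb sls.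
Proof.
move=> H1 H2; rewrite /slb ltnS; apply: fmax_ok.
elim: sls H1 => [|sl' sls IH] //= [->|H]; apply/In_cat; [by left | right; exact: IH].
Qed.

Definition fP al B W p (s : psort) (n : nat) := B + p * W + vidx (s, n) (ov al).

Fixpoint placeP al B W p (vs : seq var) (sl : seq nat) : seq (pr L) :=
  match vs, sl with
  | v :: vs', n :: sl' =>
      existT (fun s => (nat * term L s)%type) v.1 (n, tren (fP al B W p) (uterm al v))
        :: placeP al B W p vs' sl'
  | _, _ => [::]
  end.

Fixpoint fillP al B W p (sls : seq (seq nat)) : seq (pr L) :=
  match sls with
  | [::] => [::]
  | sl :: sls' => placeP al B W p (nv al) sl ++ fillP al B W p.+1 sls'
  end.

Definition blk B W p := mkseq (fun k => B + p * W + k) W.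

Lemma placeP_vars al B W p vs sl q v :
  List.In q (placeP al B W p vs sl) -> (forall u, List.In u vs -> List.In u (nv al)) ->
  tvars (projT2 q).2 v -> exists n', List.In (v.1, n') (ov al) /\ v.2 = fP al B W p v.1 n'.
Proof.
elim: vs sl => [|u vs IH] [|n sl] //= [<-|Hq] Hvs Hv.
- case/tvars_tren: Hv => n' [Ht E]; exists n'; split => //.
  by apply: (uterm_vars _ Ht); apply: Hvs; left.
- by apply: (IH sl Hq) => // u' Hu'; apply: Hvs; right.
Qed.

Lemma fillP_vars al B W p sls q v :
  List.In q (fillP al B W p sls) -> tvars (projT2 q).2 v ->
  exists r n', p <= r < p + size sls /\ List.In (v.1, n') (ov al) /\ v.2 = fP al B W r v.1 n'.
Proof.
elim: sls p => [|sl sls IH] p //= /In_cat [Hq|Hq] Hv.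
- case: (placeP_vars Hq (fun u H => H) Hv) => n' [H1 H2]; exists p, n'.
  by split => //; rewrite leqnn /= addnS ltnS leq_addr.
- case: (IH p.+1 Hq Hv) => r [n' [Hr H]]; exists r, n'; split => //.
  move: Hr; rewrite addnS addSn; case/andP => H1 H2; rewrite ltnW //.
Qed.

Lemma placeP_names al B W p vs sl j :
  j < minn (size vs) (size sl) ->
  List.In ((nth (VF, 0) vs j).1, nth 0 sl j) (map (@pname L) (placeP al B W p vs sl)).
Proof.
elim: vs sl j => [|u vs IH] [|n sl] [|j] //=; first by left.
by rewrite minnSS => H; right; apply: IH.
Qed.

Lemma fillP_names al B W p sls v :
  slotvar (nv al) sls v -> List.In v (map (@pname L) (fillP al B W p sls)).
Proof.
case=> sl [Hsl [j [Hj ->]]].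
elim: sls p Hsl => [|sl' sls IH] p //= [E|H]; rewrite map_cat In_cat.
- by left; rewrite E; apply: placeP_names.
- by right; apply: IH.
Qed.

Lemma placeP_names_in al B W p vs sl v :
  List.In v (map (@pname L) (placeP al B W p vs sl)) -> List.In v.2 sl.
Proof.
elim: vs sl => [|u vs IH] [|n sl] //= [<-|H]; [by left | right; exact: IH].
Qed.

Lemma fillP_names_in al B W p sls v :
  List.In v (map (@pname L) (fillP al B W p sls)) -> exists sl, List.In sl sls /\ List.In v.2 sl.
Proof.
elim: sls p => [|sl sls IH] p //=; rewrite map_cat In_cat => -[H|H].
- by exists sl; split; [left | exact: placeP_names_in H].
- by case: (IH _ H) => sl' [H1 H2]; exists sl'; split; [right|].
Qed.

Lemma place_updw al B W p (g : asg K) vs sl (d0 base : asg K) :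
  (forall u, List.In u vs -> teval g (tren (fP al B W p) (uterm al u)) = d0 u.1 u.2) ->
  place vs sl d0 base = updw g (placeP al B W p vs sl) base.
Proof.
elim: vs sl => [|u vs IH] [|n sl] //= H.
rewrite IH; last by move=> u' Hu'; apply: H; right.
by rewrite H //; left.
Qed.

Lemma fill_updw al B W (g : asg K) sls p Ks (base : asg K) :
  size Ks = size sls ->
  (forall r, p <= r < p + size sls -> forall u, List.In u (nv al) ->
     teval g (tren (fP al B W r) (uterm al u)) = d' al (nth 0 Ks (r - p)) u.1 u.2) ->
  fill (nv al) sls (d' al) Ks base = updw g (fillP al B W p sls) base.
Proof.
elim: sls p Ks => [|sl sls IH] p [|i Ks] //= [Hs] H.
rewrite updw_cat -(IH p.+1 Ks) //; last first.
  move=> r Hr u Hu; rewrite (H r) //; last by move: Hr; lia.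
  by have -> : r - p = (r - p.+1).+1 by move: Hr; lia.
apply: place_updw => u Hu; rewrite (H p) ?subnn //; lia.
Qed.

Lemma fill_blk B (vs : seq var) (d0 : nat -> asg K) (e : asg K) m q Ks r k :
  size Ks = m -> q <= r < q + m -> k < size vs ->
  fill vs (map (blk B (size vs)) (iota q m)) d0 Ks e (nth (VF, 0) vs k).1 (B + r * size vs + k)
  = d0 (nth 0 Ks (r - q)) (nth (VF, 0) vs k).1 (nth (VF, 0) vs k).2.
Proof.
elim: m q Ks => [|m IH] q [|i Ks] //=; first by lia.
move=> [Hs] Hr Hk.
case: (eqVneq r q) => [->|Hne].
  have := @place_at L K vs (blk B (size vs) q) (d0 i)
            (fill vs (map (blk B (size vs)) (iota q.+1 m)) d0 Ks e) k.
  rewrite nth_mkseq // subnn /= => -> //; last by rewrite size_mkseq.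
  by apply: mkseq_uniq => x y /eqP; rewrite eqn_add2l => /eqP.
rewrite place_notin; last first.
  case/In_mkseq => k' [Hk' E].
  have : q.+1 * size vs <= r * size vs by apply: leq_mul => //; lia.
  move: E; lia.
rewrite IH //; last by lia.
by have -> : r - q = (r - q.+1).+1 by lia.
Qed.

Definition transl_concl al theta sls e :=
  exists theta_o sls_o (e_o : asg K), size sls_o = size sls /\
    (forall s n, fvF theta_o (s, n) -> ~ slotvar (ov al) sls_o (s, n) -> A_old al (e_o s n)) /\
    forall Ks, size Ks = size sls ->
      (sat (fill (nv al) sls (d' al) Ks e) theta <-> sat (fill (ov al) sls_o (dd al) Ks e_o) theta_o).

Lemma transl0 al theta sls (e : asg K) :
  (forall s n, fvF theta (s, n) -> ~ slotvar (nv al) sls (s, n) -> A_old al (e s n)) ->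
  transl_concl al theta sls e.
Proof.
move=> HA.
pose B := maxn (fbound theta) (slb sls).
pose W := size (ov al).
pose P := fillP al B W 0 sls.
have HBf : fbound theta <= B by apply: leq_maxl.
have HBs : slb sls <= B by apply: leq_maxr.
exists (chain P theta), (mkseq (blk B W) (size sls)), e.
split; first by rewrite size_mkseq.
split.
- move=> s n /fvF_chain [[Hf Hn]|[q [Hq Hv]]] Hns.
  + apply: HA Hf _ => Hsl; apply: Hn; exact: fillP_names Hsl.
  + exfalso; apply: Hns.
    case: (fillP_vars Hq Hv) => r [n' [Hr [Hin /= E]]].
    exists (blk B W r); split; first by apply/In_mkseq; exists r; split => //; lia.
    have [Hk Hnth] := vidx_ok Hin.
    exists (vidx (s, n') (ov al)); split; first by rewrite size_mkseq minnn.
    by rewrite Hnth nth_mkseq //= E.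
- move=> Ks HK.
  pose g := fill (ov al) (mkseq (blk B W) (size sls)) (dd al) Ks e.
  have Hg : forall r s n, r < size sls -> List.In (s, n) (ov al) ->
      g s (fP al B W r s n) = dd al (nth 0 Ks r) s n.
    move=> r s n Hr Hin; have [Hk Hnth] := vidx_ok Hin.
    have := @fill_blk B (ov al) (dd al) e (size sls) 0 Ks r (vidx (s, n) (ov al)) HK.
    rewrite subn0 Hnth /= => H; rewrite /g /fP /mkseq -H //; lia.
  have Hfill : fill (nv al) sls (d' al) Ks e = updw g P e.
    apply: fill_updw => // r Hr u Hu.
    rewrite teval_tren subn0 -uterm_val //; apply: teval_ext => s' n' Hv.
    apply: Hg; [lia | exact: uterm_vars Hu Hv].
  rewrite chain_sat; last first.
    move=> q Hq v Hv Hn.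
    case: (fillP_vars Hq Hv) => r [n' [_ [_ E]]].
    case: (fillP_names_in Hn) => sl [Hsl Hm].
    have := slb_ok Hsl Hm; rewrite E /fP; lia.
  rewrite Hfill; apply: sat_ext => s n Hf; apply: updw_ext.
  rewrite /g fill_notin //.
  move=> sl /In_mkseq [r [Hr ->]] /In_mkseq [k [Hk E]].
  have := fbound_ok Hf; rewrite /= E; lia.
Qed.

Lemma transl al Lq : forall theta sls (e : asg K),
  (forall s n, fvF theta (s, n) -> ~ slotvar (nv al) sls (s, n) ->
     A_old al (e s n) \/ (List.In (s, n) Lq /\ A_new al (e s n))) ->
  transl_concl al theta sls e.
Proof.
elim: Lq => [|v0 Lq IH] theta sls e HA.
  by apply: transl0 => s n Hf Hns; case: (HA s n Hf Hns) => // -[[]].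
case: (classic (exists s n, v0 = (s, n) /\ fvF theta (s, n) /\
          ~ slotvar (nv al) sls (s, n) /\ A_new al (e s n))); last first.
  move=> Hno; apply: IH => s n Hf Hns.
  case: (HA s n Hf Hns) => [H|[[E|H] H']]; [by left | | by right].
  by exfalso; apply: Hno; exists s, n.
move=> [s [n [Ev0 [Hf [Hns [be [i [n' [Hbe [Hin Eval]]]]]]]]]].
pose B := maxn (fbound theta) (slb sls).
have HBf : fbound theta <= B by apply: leq_maxl.
have HBs : slb sls <= B by apply: leq_maxr.
pose fr := fun (s0 : psort) (m : nat) => B + vidx (s0, m) (ov be).
pose t' := tren fr (uterm be (s, n')).
pose pp : pr L := existT (fun s => (nat * term L s)%type) s (n, t').
pose e1 : asg K := fun s0 m =>
  if B <= m then dd be i s0 (nth (VF, 0) (ov be) (m - B)).2 else e s0 m.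
have He1 : forall s0 m, List.In (s0, m) (ov be) -> e1 s0 (fr s0 m) = dd be i s0 m.
  move=> s0 m Hm; rewrite /e1 /fr leq_addr addKn; have [_ Hnth] := vidx_ok Hm.
  by rewrite Hnth.
have Hnb : n < B by have := fbound_ok' Hf; lia.
case: (IH (chain [:: pp] theta) sls e1) => [s0 m Hf0 Hns0|theta_o [sls_o [e_o [Hsz [HA' Heq]]]]].
  case/fvF_chain: Hf0 => [[Hf0 Hn0]|[q [[<-|[]] Hv]]].
  + have Hm : m < B by have := fbound_ok' Hf0; lia.
    rewrite /e1 leqNgt Hm /=.
    case: (HA s0 m Hf0 Hns0) => [H|[[E|H] H']]; [by left | | by right].
    by exfalso; apply: Hn0; left; rewrite /pname /= -E Ev0.
  + case: (tvars_tren Hv) => k [Hk Em]; move: Em => /= Em.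
    have Hink := uterm_vars Hin Hk.
    left; exists be, i, k; split => //; split => //.
    by rewrite Em He1.
exists theta_o, sls_o, e_o; split => //; split => // Ks HKs.
rewrite -Heq //.
rewrite chain_sat; last first.
  move=> q [<-|[]] v Hv [Hn|[]].
  case: (tvars_tren Hv) => k [Hk Em]; move: Hn Em; rewrite /pname /= => <- /=; rewrite /fr; lia.
rewrite /=.
have Ht : teval (fill (nv al) sls (d' al) Ks e1) t' = e s n.
  rewrite teval_tren Eval -(uterm_val i Hin); apply: teval_ext => s0 k Hk.
  have Hink := uterm_vars Hin Hk.
  rewrite fill_notin ?He1 //.
  move=> sl Hsl Hm; have := slb_ok Hsl Hm; rewrite /fr; lia.
rewrite Ht; apply: sat_ext => s0 m Hf0.
case: (var_eqbP (s, n) (s0, m)) => [[<- <-]|Ne].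
  by rewrite upd_same fill_nonslot.
rewrite upd_other //; apply: fill_ext.
have Hm : m < B by have := fbound_ok' Hf0; lia.
by rewrite /e1 leqNgt Hm.
Qed.

Lemma mi' : mut_indisc nv d'.
Proof.
move=> al theta sls I J e HA HI HJ sI sJ.
pose Bf := fbound theta.
pose Lq := [seq (VF, n) | n <- iota 0 Bf] ++ [seq (VG, n) | n <- iota 0 Bf] ++
           [seq (RF, n) | n <- iota 0 Bf].
have HLq : forall s n, n < Bf -> List.In (s, n) Lq.
  move=> s n Hn; rewrite /Lq !In_cat.
  have Hi : forall s' : psort, List.In (s', n) [seq (s', n) | n <- iota 0 Bf].
    by move=> s'; apply/In_map_iota; exists n.
  by case: s; auto.
case: (@transl al Lq theta sls e) => [s n Hf Hns|theta_o [sls_o [e_o [Hsz [HA' Heq]]]]].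
  by right; split; [apply: HLq; exact: fbound_ok Hf | exact: HA s n Hf Hns].
rewrite Heq // Heq //.
case: Hpat => _ [_ [_ [Hmi _]]].
by apply: (Hmi al theta_o sls_o I J e_o HA'); rewrite ?Hsz.
Qed.

Lemma main_concl : exists (ys'0 : kap -> seq var) (b'0 : kap -> nat -> asg K)
    (phi'0 : kap -> formula L),
  (forall al v, List.In v (ys'0 al) -> v.1 = VG \/ v.1 = RF) /\
  (forall al, List.NoDup (ys'0 al ++ zvars (zs' al))) /\
  indisc_inp_pattern (@xeqx L xn) xn phi'0
    (fun al => ys'0 al ++ zvars (zs' al))
    (fun al i => ovr (ys'0 al) (b'0 al i) (c' al i)).
Proof.
exists ys', b', phi'; split.
  move=> al v; rewrite /ys' In_cat => -[H|H]; [exact: Hys H | exact: ws_sort H].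
split; first exact: nodup'.
split; first exact: wf1'.
split; first exact: x_notin_nv.
split; first by case: Hpat => _ [_ [H _]].
split; first exact: mi'.
split; first exact: incons'.
exact: cons'.
Qed.

End Main.

Theorem lemma4p3 (L : lang) (T : theory L) :
  hvf_theory T -> relQE T ->
  forall (Lam : Type) (K : structure L), model T K -> saturated Lam K ->
  forall (kap : Type) (xn : nat) (psi : kap -> formula L)
         (ys : kap -> seq var) (zs zs' : kap -> seq nat)
         (b c c' : kap -> nat -> asg K),
    (* y_al : VG/RF-psort variables; x, y_al, z_al, z'_al pairwise distinct *)
    (forall al v, List.In v (ys al) -> v.1 = VG \/ v.1 = RF) ->
    (forall al, List.NoDup (ys al ++ zvars (zs al) ++ zvars (zs' al))) ->
    indisc_inp_pattern (@xeqx L xn) xn psi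
      (fun al => ys al ++ zvars (zs al) ++ zvars (zs' al))
      (fun al i => ovr (ys al) (b al i) (ovr (zvars (zs al)) (c al i) (c' al i))) ->
    (forall al, exists ts : seq {s : psort & term L s},
        (forall t, List.In t ts -> (projT1 t = VG \/ projT1 t = RF) /\
                                   ~ tvars (projT2 t) (VF, xn)) /\
        covF (zs al) ts [::] (psi al)) ->
    exists (ys' : kap -> seq var) (b' : kap -> nat -> asg K)
           (phi' : kap -> formula L),
      (forall al v, List.In v (ys' al) -> v.1 = VG \/ v.1 = RF) /\
      (forall al, List.NoDup (ys' al ++ zvars (zs' al))) /\
      indisc_inp_pattern (@xeqx L xn) xn phi'
        (fun al => ys' al ++ zvars (zs' al))
        (fun al i => ovr (ys' al) (b' al i) (c' al i)).
Proof.
move=> _ _ Lam K _ _ kap xn psi ys zs zs' b c c' Hys Hnd Hpat Hts.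
pose tsf := fun al => proj1_sig (constructive_indefinite_description _ (Hts al)).
have Htsf : forall al, _ := fun al => proj2_sig (constructive_indefinite_description _ (Hts al)).
apply: (@main_concl L K kap xn psi ys zs zs' b c c' tsf) => //.
- by move=> al t Ht; apply: (proj1 (Htsf al)).
- by move=> al; apply: (proj2 (Htsf al)).
Qed.
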